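(* Let $q$ be a prime power and $\mathcal{L}$ a non-empty set of lines of $\mathrm{PG}(n,q)$ satisfying (Pt), (Pl), (Sd) and (To) (see context). Suppose $\mathcal{L}$ contains a pentagon with vertices $A,B,C,D,E$ (so $AB,BC,CD,DE,EA\in\mathcal{L}$), and let $U=\langle A,B,C,D,E\rangle$. Then the only $(q+1)$-$U$-points on the line $BE$ of $\mathrm{PG}(n,q)$ are $B$ and $E$.
   Context: (Pt): every point of $\mathrm{PG}(n,q)$ lies on $0$ or $q+1$ lines of $\mathcal{L}$. (Pl): every plane contains $0$, $1$ or $q+1$ lines of $\mathcal{L}$. (Sd): every solid ($3$-dimensional subspace) contains $0$, $1$, $q+1$ or $2q+1$ lines of $\mathcal{L}$. (To): $|\mathcal{L}|\le q^5+q^4+q^3+q^2+q+1$. A pentagon of $\mathcal{L}$ with vertices $A,B,C,D,E$ is a set of five pairwise distinct points such that the lines $AB,BC,CD,DE,EA$ all belong to $\mathcal{L}$ and are pairwise distinct. For a subspace $U$, a point $P$ is a $(q+1)$-$U$-point if exactly $q+1$ lines of $\mathcal{L}$ pass through $P$ and are contained in $U$. *)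

(* Defs.v *)
(* Projective space PG(n,q) = subspaces of F^(n+1), F a finite
   field with q = #|F| elements. A projective subspace is represented by its
   set of vectors (a linear subspace of 'rV[F]_(n.+1)). *)
From HB Require Import structures.
From mathcomp Require Import all_boot all_order all_algebra.
Set Implicit Arguments. Unset Strict Implicit. Unset Printing Implicit Defensive.
Import GRing.Theory.
Local Open Scope ring_scope.

Section PG.
Variables (F : finFieldType) (n : nat).
Notation V := 'rV[F]_(n.+1).

Definition pspan (S : {set V}) : 'M[F]_(n.+1) := (\sum_(v in S) <<v>>)%MS.

Definition pclosure (S : {set V}) : {set V} := [set v | (v <= pspan S)%MS].

(* S is a projective subspace of projective dimension k
   (i.e. a linear subspace of vector dimension k+1) *)
Definition is_psub (k : nat) (S : {set V}) : bool :=
  (S == pclosure S) && (\rank (pspan S) == k.+1).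

Definition is_point := is_psub 0.
Definition is_line  := is_psub 1.
Definition is_plane := is_psub 2.
Definition is_solid := is_psub 3.
End PG.

(* Main.v *)
Require Import Defs.
From mathcomp Require Import all_boot all_order all_algebra zify.
Set Implicit Arguments. Unset Strict Implicit. Unset Printing Implicit Defensive.


Section Lin.
Variables (F : finFieldType) (n : nat).
Local Notation V := 'rV[F]_(n.+1).

Definition ps k (M : 'M[F]_(k, n.+1)) : {set V} := [set v : V | (v <= M)%MS].

Lemma mem_pspan (S : {set V}) v : v \in S -> (v <= pspan S)%MS.
Proof. by move=> vS; apply: (sumsmx_sup v) => //; rewrite genmxE. Qed.

Lemma pspan_leP k (S : {set V}) (M : 'M_(k, n.+1)) :
  (forall v, v \in S -> (v <= M)%MS) -> (pspan S <= M)%MS.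
Proof. by move=> h; apply/sumsmx_subP => v vS; rewrite genmxE h. Qed.

Lemma pspan_ps k (M : 'M_(k, n.+1)) : (pspan (ps M) :=: M)%MS.
Proof.
apply/eqmxP; rewrite /eqmx; apply/andP; split.
  by apply: pspan_leP => v; rewrite inE.
by apply/row_subP => i; apply: mem_pspan; rewrite inE row_sub.
Qed.

Lemma ps_sub k1 k2 (M : 'M_(k1, n.+1)) (N : 'M_(k2, n.+1)) :
  (ps M \subset ps N) = (M <= N)%MS.
Proof.
apply/subsetP/idP => [h | h v].
  by apply/row_subP => i; have := h (row i M); rewrite !inE row_sub => /(_ isT).
by rewrite !inE => /submx_trans; apply.
Qed.

Lemma ps_eq k1 k2 (M : 'M_(k1, n.+1)) (N : 'M_(k2, n.+1)) :
  (M <= N)%MS -> (N <= M)%MS -> ps M = ps N.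
Proof.
by move=> h1 h2; apply/eqP; rewrite eqEsubset !ps_sub h1 h2.
Qed.

Lemma psubE k (S : {set V}) : is_psub k S -> S = ps (pspan S).
Proof. by case/andP => /eqP. Qed.

Lemma psub_rank k (S : {set V}) : is_psub k S -> \rank (pspan S) = k.+1.
Proof. by case/andP => _ /eqP. Qed.

Lemma is_psub_ps k j (M : 'M_(j, n.+1)) : \rank M = k.+1 -> is_psub k (ps M).
Proof.
move=> r; apply/andP; split; last by rewrite (pspan_ps M) r.
apply/eqP; apply: ps_eq; rewrite ?pspan_ps //.
Qed.

Lemma sub_psub k j (S T : {set V}) : is_psub k S -> is_psub j T ->
  (S \subset T) = (pspan S <= pspan T)%MS.
Proof. by move=> hS hT; rewrite {1}(psubE hS) {1}(psubE hT) ps_sub. Qed.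

Lemma eq_psub k j (S T : {set V}) : is_psub k S -> is_psub j T ->
  (pspan S <= pspan T)%MS -> (pspan T <= pspan S)%MS -> S = T.
Proof. by move=> hS hT h1 h2; rewrite (psubE hS) (psubE hT); apply: ps_eq. Qed.

Lemma pspanU (S T : {set V}) : (pspan (S :|: T) :=: pspan S + pspan T)%MS.
Proof.
apply/eqmxP; rewrite /eqmx; apply/andP; split.
  apply: pspan_leP => v; case/setUP => h.
    exact: submx_trans (mem_pspan h) (addsmxSl _ _).
  exact: submx_trans (mem_pspan h) (addsmxSr _ _).
rewrite addsmx_sub; apply/andP; split; apply: pspan_leP => v h;
  apply: mem_pspan; rewrite inE h ?orbT //.
Qed.

Lemma pspan_pcl (S : {set V}) : (pspan (pclosure S) :=: pspan S)%MS.
Proof. exact: pspan_ps. Qed.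

Local Open Scope ring_scope.
Lemma card_ps k (M : 'M_(k, n.+1)) : #|ps M| = (#|F| ^ \rank M)%N.
Proof.
have -> : ps M = [set (y *m row_base M)%R | y in [set: 'rV[F]_(\rank M)]].
  apply/setP => v; rewrite inE; apply/idP/imsetP => [|[y _ ->]].
    by rewrite -(eq_row_base M) => /submxP[y ->]; exists y; rewrite ?inE.
  by rewrite -(eq_row_base M) submxMl.
rewrite card_imset ?cardsT ?card_mx ?mul1n //.
exact: row_free_inj (row_base_free M).
Qed.

End Lin.


Section Rank.
Variables (F : fieldType) (N : nat).
Implicit Types (k m j : nat).

Lemma sub_rank m1 m2 (A : 'M[F]_(m1, N)) (B : 'M[F]_(m2, N)) :
  (A <= B)%MS -> \rank B <= \rank A -> (B <= A)%MS.
Proof.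
move=> sAB le; have := mxrank_leqif_sup sAB; case=> _ <-.
by rewrite eqn_leq le mxrankS.
Qed.

Lemma rank_add_pt m1 m2 (M : 'M[F]_(m1, N)) (p : 'M[F]_(m2, N)) :
  \rank p = 1 -> ~~ (p <= M)%MS -> \rank (M + p)%MS = (\rank M).+1.
Proof.
move=> rp npM; have := mxrank_sum_cap M p.
have -> : \rank (M :&: p)%MS = 0.
  have : \rank (M :&: p)%MS <= 1 by rewrite -rp mxrankS ?capmxSr.
  rewrite leq_eqVlt ltnS leqn0 => /orP[/eqP h|/eqP //].
  case/negP: npM; have := sub_rank (capmxSr M p); rewrite h rp => /(_ (leqnn 1)).
  by move=> h2; apply: submx_trans h2 (capmxSl _ _).
by rewrite addn0 rp addn1.
Qed.

Lemma cap_hyper_rank m1 m2 m3 (K : 'M[F]_(m1, N)) (M : 'M[F]_(m2, N))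
  (P : 'M[F]_(m3, N)) :
  (K <= M)%MS -> (K <= P)%MS -> \rank M = (\rank K).+1 -> \rank P = \rank M ->
  ~~ (M <= P)%MS -> \rank (M :&: P)%MS = \rank K.
Proof.
move=> sKM sKP rM rP nMP.
have h1 : \rank K <= \rank (M :&: P)%MS by rewrite mxrankS // sub_capmx sKM.
have h2 : \rank (M :&: P)%MS < \rank M.
  rewrite ltn_neqAle mxrankS ?capmxSl // andbT; apply/negP => /eqP h.
  case/negP: nMP; have := sub_rank (capmxSl M P); rewrite h => /(_ (leqnn _)).
  by move=> h3; apply: submx_trans h3 (capmxSr _ _).
by apply/eqP; rewrite eqn_leq h1 -ltnS -rM h2.
Qed.

Lemma cap_hyper_sub m1 m2 m3 m4 (K : 'M[F]_(m1, N)) (M : 'M[F]_(m2, N))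
  (P : 'M[F]_(m3, N)) (O : 'M[F]_(m4, N)) :
  (K <= M)%MS -> (K <= P)%MS -> \rank M = (\rank K).+1 -> \rank P = \rank M ->
  ~~ (M <= P)%MS -> (O <= M)%MS -> (O <= P)%MS -> (O <= K)%MS.
Proof.
move=> sKM sKP rM rP nMP sOM sOP.
have hr := cap_hyper_rank sKM sKP rM rP nMP.
have sKc : (K <= M :&: P)%MS by rewrite sub_capmx sKM.
have := sub_rank sKc; rewrite hr => /(_ (leqnn _)) h.
by apply: submx_trans h; rewrite sub_capmx sOM.
Qed.

Lemma cap_hyper_sum m1 m2 m3 (K : 'M[F]_(m1, N)) (M : 'M[F]_(m2, N))
  (P : 'M[F]_(m3, N)) :
  (K <= M)%MS -> (K <= P)%MS -> \rank M = (\rank K).+1 -> \rank P = \rank M ->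
  ~~ (M <= P)%MS -> \rank (M + P)%MS = (\rank M).+1.
Proof.
move=> sKM sKP rM rP nMP.
have := mxrank_sum_cap M P; rewrite (cap_hyper_rank sKM sKP rM rP nMP) rP rM.
by rewrite -addSnnS => /eqP; rewrite eqn_add2r => /eqP.
Qed.

Lemma line_sub m1 m2 m3 m4 (x : 'M[F]_(m1, N)) (y : 'M[F]_(m2, N))
  (l1 : 'M[F]_(m3, N)) (l2 : 'M[F]_(m4, N)) :
  \rank x = 1 -> \rank y = 1 -> ~~ (y <= x)%MS -> \rank l1 = 2 ->
  (x <= l1)%MS -> (y <= l1)%MS -> (x <= l2)%MS -> (y <= l2)%MS -> (l1 <= l2)%MS.
Proof.
move=> rx ry nyx rl1 x1 y1 x2 y2.
have rxy : \rank (x + y)%MS = 2 by rewrite rank_add_pt // rx.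
have s1 : (x + y <= l1)%MS by rewrite addsmx_sub x1.
have := sub_rank s1; rewrite rxy rl1 => /(_ (leqnn 2)) h.
by apply: submx_trans h _; rewrite addsmx_sub x2.
Qed.

End Rank.


Lemma rank_add_line (F : fieldType) N m1 m2 m3 (K : 'M[F]_(m1, N)) (A : 'M[F]_(m2, N))
  (M : 'M[F]_(m3, N)) :
  \rank K = 1 -> (K <= A)%MS -> (K <= M)%MS -> \rank M = 2 -> ~~ (M <= A)%MS ->
  \rank (A + M)%MS = (\rank A).+1.
Proof.
move=> rK sKA sKM rM nMA.
have h1 : 1 <= \rank (A :&: M)%MS by rewrite -rK mxrankS // sub_capmx sKA.
have h2 : \rank (A :&: M)%MS < 2.
  rewrite ltn_neqAle -{2}rM mxrankS ?capmxSr // andbT; apply/negP => /eqP h.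
  case/negP: nMA; have := sub_rank (capmxSr A M); rewrite h rM => /(_ (leqnn _)).
  by move=> h3; apply: submx_trans h3 (capmxSl _ _).
have e : \rank (A :&: M)%MS = 1 by apply/eqP; rewrite eqn_leq h1 -ltnS h2.
have := mxrank_sum_cap A M; rewrite e rM => /eqP.
by rewrite addn1 addn2 eqSS => /eqP.
Qed.

Lemma q_gt1 (F : finFieldType) : 1 < #|F|.
Proof. by apply/card_gt1P; exists 0%R, 1%R; rewrite eq_sym GRing.oner_neq0. Qed.

Lemma card_disj_bigcup (I T : finType) (f : I -> {set T}) (S : {set I}) :
  {in S &, forall i j, i != j -> [disjoint f i & f j]} ->
  #|\bigcup_(i in S) f i| = \sum_(i in S) #|f i|.
Proof.
move: {2}#|S| (erefl #|S|) => k; elim: k S => [|k IH] S hk hdis.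
  by move/eqP: hk; rewrite cards_eq0 => /eqP ->; rewrite !big_set0 cards0.
have : 0 < #|S| by rewrite hk.
case/card_gt0P => i iS.
rewrite (big_setD1 i iS) /= (big_setD1 i iS) /=.
rewrite cardsU IH; first last.
- by move=> a b; rewrite !inE => /andP[_ aS] /andP[_ bS]; apply: hdis.
- by move: hk; rewrite (cardsD1 i S) iS add1n => -[].
suff -> : f i :&: \bigcup_(j in S :\ i) f j = set0 by rewrite cards0 subn0.
apply/setP => v; rewrite !inE; apply/negP => /andP[v1 /bigcupP[j]].
rewrite !inE => /andP[ji jS] v2.
have := hdis i j iS jS; rewrite eq_sym ji => /(_ isT).
by rewrite -setI_eq0 => /eqP/setP/(_ v); rewrite !inE v1 v2.
Qed.

Section Geo.
Variables (F : finFieldType) (n : nat) (L : {set {set 'rV[F]_(n.+1)}}).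
Local Notation q := #|F|.
Hypothesis hline : forall l, l \in L -> is_line l.
Hypothesis hPt : forall P, is_point P ->
     #|[set l in L | P \subset l]| \in [:: 0; q.+1].
Hypothesis hPl : forall p, is_plane p ->
     #|[set l in L | l \subset p]| \in [:: 0; 1; q.+1].
Hypothesis hSd : forall s, is_solid s ->
     #|[set l in L | l \subset s]| \in [:: 0; 1; q.+1; (2 * q).+1].

Definition Lin k (M : 'M[F]_(k, n.+1)) := [set l in L | (pspan l <= M)%MS].
Definition Lth k (M : 'M[F]_(k, n.+1)) := [set l in L | (M <= pspan l)%MS].

Lemma rank_l l : l \in L -> \rank (pspan l) = 2.
Proof. by move/hline/psub_rank. Qed.

Lemma Lin_eq k (M : 'M[F]_(k, n.+1)) : [set l in L | l \subset ps M] = Lin M.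
Proof.
apply/setP => l; rewrite !inE; case lL: (l \in L) => //=.
by rewrite {1}(psubE (hline lL)) ps_sub.
Qed.

Lemma Lin_pl k (M : 'M[F]_(k, n.+1)) : \rank M = 3 -> #|Lin M| \in [:: 0; 1; q.+1].
Proof. by move=> r; rewrite -Lin_eq; apply: hPl; apply: is_psub_ps. Qed.

Lemma Lin_sd k (M : 'M[F]_(k, n.+1)) : \rank M = 4 ->
  #|Lin M| \in [:: 0; 1; q.+1; (2 * q).+1].
Proof. by move=> r; rewrite -Lin_eq; apply: hSd; apply: is_psub_ps. Qed.

Lemma Lth_pt k (x : 'M[F]_(k, n.+1)) : \rank x = 1 -> #|Lth x| \in [:: 0; q.+1].
Proof.
move=> r; have := hPt (is_psub_ps (k:=0) r).
suff -> : [set l in L | ps x \subset l] = Lth x by [].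
apply/setP => l; rewrite !inE; case lL: (l \in L) => //=.
by rewrite {1}(psubE (hline lL)) ps_sub.
Qed.

Lemma eq_lines l1 l2 : l1 \in L -> l2 \in L -> (pspan l1 <= pspan l2)%MS -> l1 = l2.
Proof.
move=> h1 h2 s; apply: (eq_psub (hline h1) (hline h2) s (sub_rank s _)).
by rewrite !rank_l.
Qed.

Lemma neq_lines l1 l2 : l1 \in L -> l2 \in L -> l1 != l2 -> ~~ (pspan l1 <= pspan l2)%MS.
Proof. by move=> h1 h2 ne; apply/negP => /(eq_lines h1 h2) e; rewrite e eqxx in ne. Qed.

Lemma card_q1 (S : {set {set 'rV[F]_(n.+1)}}) a b :
  #|S| \in [:: 0; 1; q.+1] -> a \in S -> b \in S -> a != b -> #|S| = q.+1.
Proof.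
move=> h aS bS ab; have : 1 < #|S| by apply/card_gt1P; exists a, b.
by move: h; rewrite !inE => /or3P[] /eqP ->.
Qed.

Lemma pencil k (x : 'M[F]_(k, n.+1)) l1 l2 : \rank x = 1 -> l1 \in L -> l2 \in L ->
  l1 != l2 -> (x <= pspan l1)%MS -> (x <= pspan l2)%MS ->
  [/\ \rank (pspan l1 + pspan l2)%MS = 3, #|Lth x| = q.+1 &
      Lth x = Lin (pspan l1 + pspan l2)%MS].
Proof.
move=> rx l1L l2L n12 x1 x2.
have r1 := rank_l l1L; have r2 := rank_l l2L.
have nl12 := neq_lines l1L l2L n12.
have nl21 : ~~ (pspan l2 <= pspan l1)%MS by rewrite neq_lines // eq_sym.
set pi := (pspan l1 + pspan l2)%MS.
have rpi : \rank pi = 3.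
  by rewrite (cap_hyper_sum x1 x2) ?r1 ?r2 ?rx.
have l1pi : l1 \in Lin pi by rewrite inE l1L addsmxSl.
have l2pi : l2 \in Lin pi by rewrite inE l2L addsmxSr.
have cpi : #|Lin pi| = q.+1 by apply: card_q1 (Lin_pl rpi) l1pi l2pi n12.
have cx : #|Lth x| = q.+1.
  have : 0 < #|Lth x| by apply/card_gt0P; exists l1; rewrite inE l1L.
  by move: (Lth_pt rx); rewrite !inE => /orP[] /eqP ->.
have q2 := q_gt1 F.
suff sub : Lth x \subset Lin pi.
  by split=> //; apply/eqP; rewrite eqEcard sub cpi cx leqnn.
apply/subsetP => m; rewrite !inE => /andP[mL xm]; rewrite mL /=.
apply/negPn/negP => nmpi.
set M := pspan m.
have rm : \rank M = 2 by apply: rank_l.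
set sg := (pi + M)%MS.
have rsg : \rank sg = 4.
  by rewrite /sg (rank_add_line rx) ?rpi // (submx_trans x1) ?addsmxSl.
have mpi : m \notin Lin pi by rewrite inE mL.
have msg : m \in Lin sg by rewrite inE mL addsmxSr.
have pisg : Lin pi \subset Lin sg.
  apply/subsetP => o; rewrite !inE => /andP[-> h]; exact: submx_trans h (addsmxSl _ _).
have csg : #|Lin sg| = (2 * q).+1.
  have : q.+2 <= #|Lin sg|.
    have e := cardsU1 m (Lin pi); rewrite mpi cpi add1n in e.
    rewrite -e; apply: subset_leq_card.
    by rewrite subUset sub1set msg pisg.
  by move: (Lin_sd rsg); rewrite !inE => /or4P[] /eqP ->; rewrite ?ltnn //;
     rewrite ?ltnS ?ltn0 // ltnNge ltnW.
have cD : #|Lin sg :\: Lin pi| = q.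
  by rewrite cardsDS // csg cpi mul2n -addnn subSS -addnBA // subnn addn0.
have key : forall l, l \in Lin pi -> (x <= pspan l)%MS ->
    Lin sg :\: Lin pi \subset Lin (pspan l + M)%MS.
  move=> l; rewrite inE => /andP[lL lpi] xl.
  have rl := rank_l lL.
  have nlm : ~~ (pspan l <= M)%MS.
    apply/negP => h; case/negP: nmpi; apply: submx_trans lpi.
    by apply: sub_rank h _; rewrite rl rm.
  have lm : l != m by apply/negP => /eqP e; rewrite e submx_refl in nlm.
  have rt : \rank (pspan l + M)%MS = 3 by rewrite (cap_hyper_sum xl xm) ?rl ?rm ?rx.
  have ct : #|Lin (pspan l + M)%MS| = q.+1.
    by apply: card_q1 (Lin_pl rt) _ _ lm; rewrite inE ?lL ?mL ?addsmxSl ?addsmxSr.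
  have npit : ~~ (pi <= pspan l + M)%MS.
    apply/negP => h; case/negP: nmpi.
    suff h2 : (pspan l + M <= pi)%MS by apply: submx_trans (addsmxSr _ _) h2.
    by apply: sub_rank h _; rewrite rt rpi.
  have sub2 : Lin (pspan l + M)%MS :\ l \subset Lin sg :\: Lin pi.
    apply/subsetP => o; rewrite !inE => /and3P[ol oL ot]; rewrite oL /=.
    apply/andP; split.
      apply/negP => opi; case/negP: ol; apply/eqP; apply: eq_lines oL lL _.
      by apply: (cap_hyper_sub lpi (addsmxSl (pspan l) M)) => //; rewrite ?rpi ?rl ?rt.
    by apply: submx_trans ot _; rewrite /sg addsmx_sub addsmxSr andbT
         (submx_trans lpi (addsmxSl pi M)).
  have : Lin (pspan l + M)%MS :\ l == Lin sg :\: Lin pi.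
    have := cardsD1 l (Lin (pspan l + M)%MS); rewrite ct inE lL addsmxSl /= add1n.
    by case=> e; rewrite eqEcard sub2 cD -e leqnn.
  by move/eqP <-; apply: subsetDl.
have k1 := key l1 l1pi x1; have k2 := key l2 l2pi x2.
have [o1 [o2 [o1D o2D o12]]] : exists o1 o2, [/\ o1 \in Lin sg :\: Lin pi,
    o2 \in Lin sg :\: Lin pi & o1 != o2].
  by apply/card_gt1P; rewrite cD.
have [o [oD om]] : exists o, o \in Lin sg :\: Lin pi /\ o != m.
  case: (eqVneq o1 m) => [e|]; last by exists o1.
  by exists o2; split=> //; rewrite -e eq_sym.
have o1t := subsetP k1 o oD; have o2t := subsetP k2 o oD.
move: o1t o2t; rewrite !inE => /andP[oL ot1] /andP[_ ot2].
have ml : m \in L := mL.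
case/negP: om; apply/eqP; apply: eq_lines oL mL _.
have tau : forall l, l \in Lin pi -> (x <= pspan l)%MS ->
    \rank (pspan l + M)%MS = 3 /\ ~~ (pi <= pspan l + M)%MS.
  move=> l; rewrite inE => /andP[lL lpi] xl.
  have rl := rank_l lL.
  have nlm : ~~ (pspan l <= M)%MS.
    apply/negP => h; case/negP: nmpi; apply: submx_trans lpi.
    by apply: sub_rank h _; rewrite rl rm.
  have rt : \rank (pspan l + M)%MS = 3 by rewrite (cap_hyper_sum xl xm) ?rl ?rm ?rx.
  split=> //; apply/negP => h; case/negP: nmpi.
  suff h2 : (pspan l + M <= pi)%MS by apply: submx_trans (addsmxSr _ _) h2.
  by apply: sub_rank h _; rewrite rt rpi.
have [rt1 n1] := tau l1 l1pi x1; have [rt2 n2] := tau l2 l2pi x2.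
apply: (cap_hyper_sub (addsmxSr (pspan l1) M) (addsmxSr (pspan l2) M)) => //.
- by rewrite rt1 rm.
- by rewrite rt1 rt2.
apply/negP => h; case/negP: nl12.
apply: (cap_hyper_sub (addsmxSr (pspan l1) (pspan l2)) (addsmxSl (pspan l2) M) _ _ n2) => //.
- by rewrite rpi r2.
- by rewrite rt2 rpi.
- exact: addsmxSl.
- exact: submx_trans (addsmxSl _ _) h.
Qed.


Lemma Lin_mono k1 k2 (M : 'M[F]_(k1, n.+1)) (N : 'M[F]_(k2, n.+1)) :
  (M <= N)%MS -> Lin M \subset Lin N.
Proof.
by move=> h; apply/subsetP => l; rewrite !inE => /andP[-> h2]; apply: submx_trans h2 h.
Qed.

Lemma Lth_inter k1 k2 (x : 'M[F]_(k1, n.+1)) (y : 'M[F]_(k2, n.+1)) :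
  \rank x = 1 -> \rank y = 1 -> ~~ (y <= x)%MS -> #|Lth x :&: Lth y| <= 1.
Proof.
move=> rx ry nyx; apply/card_le1_eqP => m1 m2.
rewrite !inE => /andP[/andP[m1L xm1] /andP[_ ym1]] /andP[/andP[m2L xm2] /andP[_ ym2]].
apply: (eq_lines m2L m1L).
by apply: (line_sub rx ry nyx) => //; apply: rank_l.
Qed.

Lemma covering k (x : 'M[F]_(k, n.+1)) l1 l2 (w : 'rV[F]_(n.+1)) : \rank x = 1 -> l1 \in L -> l2 \in L ->
  l1 != l2 -> (x <= pspan l1)%MS -> (x <= pspan l2)%MS ->
  (w <= pspan l1 + pspan l2)%MS -> exists2 m, m \in Lth x & (w <= pspan m)%MS.
Proof.
move=> rx l1L l2L n12 x1 x2 wpi.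
have [rpi cx eqx] := pencil rx l1L l2L n12 x1 x2.
set pi := (pspan l1 + pspan l2)%MS in rpi eqx wpi.
case: (boolP (w <= x)%MS) => wx.
  by exists l1; rewrite ?inE ?l1L ?x1 // (submx_trans wx x1).
have xpi : (x <= pi)%MS by apply: submx_trans x1 (addsmxSl _ _).
pose f m := ps (pspan m) :\: ps x.
have fsub : \bigcup_(m in Lth x) f m \subset ps pi :\: ps x.
  apply/subsetP => v /bigcupP[m]; rewrite eqx !inE => /andP[_ mpi] /andP[-> vm] /=.
  exact: submx_trans vm mpi.
have fcard : #|ps pi :\: ps x| <= #|\bigcup_(m in Lth x) f m|.
  rewrite card_disj_bigcup; last first.
    move=> m1 m2; rewrite !inE => /andP[m1L xm1] /andP[m2L xm2] ne.
    rewrite -setI_eq0; apply/eqP/setP => v; rewrite !inE.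
    apply/negP => /andP[/andP[vx vm1] /andP[_ vm2]].
    case/negP: ne; apply/eqP; apply: (eq_lines m1L m2L).
    have rv : \rank v = 1.
      rewrite rank_rV; case: eqP => // v0; move: vx; rewrite v0 sub0mx //.
    by apply: (line_sub rx rv vx) => //; apply: rank_l.
  rewrite (eq_bigr (fun _ => (#|F| ^ 2 - #|F| ^ 1)%N)); last first.
    move=> m; rewrite inE => /andP[mL xm].
    by rewrite cardsDS ?ps_sub // !card_ps rank_l // rx.
  rewrite sum_nat_const cx cardsDS ?ps_sub // !card_ps rpi rx.
  have := q_gt1 F; move: (#|F|) => Q hQ; rewrite !expnS expn0 !muln1; nia.
have e : \bigcup_(m in Lth x) f m = ps pi :\: ps x.
  by apply/eqP; rewrite eqEcard fsub fcard.
have : w \in ps pi :\: ps x by rewrite !inE wpi wx.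
by rewrite -e => /bigcupP[m mx]; rewrite !inE => /andP[_ wm]; exists m.
Qed.

End Geo.


Section Aux.
Variables (F : finFieldType) (n : nat).
Local Notation V := 'rV[F]_(n.+1).

Lemma pt_eq (X Y : {set V}) : is_point X -> is_point Y ->
  (pspan X <= pspan Y)%MS -> X = Y.
Proof.
move=> hX hY s; apply: (eq_psub hX hY s (sub_rank s _)).
by rewrite (psub_rank hX) (psub_rank hY).
Qed.

Lemma pt_neq (X Y : {set V}) : is_point X -> is_point Y -> X != Y ->
  ~~ (pspan Y <= pspan X)%MS.
Proof.
by move=> hX hY ne; apply/negP => /(pt_eq hY hX) e; rewrite e eqxx in ne.
Qed.

Lemma span2 (X Y : {set V}) :
  (pspan (pclosure (X :|: Y)) :=: pspan X + pspan Y)%MS.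
Proof. exact: eqmx_trans (pspan_pcl _) (pspanU _ _). Qed.

Lemma rank_spanU (X Y : {set V}) :
  \rank (pspan (X :|: Y)) <= \rank (pspan X) + \rank (pspan Y).
Proof. by rewrite (pspanU X Y); case: (mxrank_adds_leqif (pspan X) (pspan Y)). Qed.

Lemma sub_pcl (X S : {set V}) : is_point X ->
  (X \subset pclosure S) = (pspan X <= pspan S)%MS.
Proof. by move=> hX; rewrite {1}(psubE hX) ps_sub. Qed.

Lemma psub_sub_ps k j (S : {set V}) (M : 'M[F]_(j, n.+1)) : is_psub k S ->
  (S \subset ps M) = (pspan S <= M)%MS.
Proof. by move=> hS; rewrite {1}(psubE hS) ps_sub. Qed.

Lemma pspanS (X Y : {set V}) : X \subset Y -> (pspan X <= pspan Y)%MS.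
Proof. by move/subsetP => h; apply: pspan_leP => v /h; apply: mem_pspan. Qed.

End Aux.

Lemma final_arith (Q x y w xy xw yw xyw z : nat) : 1 < Q ->
  x = Q.+1 -> y = Q.+1 -> w = Q.+1 -> xy <= 1 -> xw <= 1 -> yw <= 1 ->
  z \in [:: 0; 1; Q.+1; (2 * Q).+1] ->
  forall s1 s2 i2, s1 + xy = x + y -> s2 + i2 = s1 + w -> i2 <= xw + yw -> s2 <= z -> False.
Proof.
move=> hQ -> -> -> h1 h2 h3; rewrite !inE => hz s1 s2 i2 e1 e2 hi hs.
case/or4P: hz => /eqP hz; subst z; lia.
Qed.

Lemma swap_pt (F : fieldType) N m1 m2 m3 (b : 'M[F]_(m1, N)) (e : 'M[F]_(m2, N))
  (p : 'M[F]_(m3, N)) :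
  \rank b = 1 -> \rank e = 1 -> \rank p = 1 -> ~~ (p <= b)%MS ->
  (p <= b + e)%MS -> (e <= b + p)%MS.
Proof.
move=> rb re rp npb pbe.
have rbp : \rank (b + p)%MS = 2 by rewrite rank_add_pt // rb.
have sbp : (b + p <= b + e)%MS by rewrite addsmx_sub addsmxSl pbe.
have rbe : \rank (b + e)%MS <= 2.
  by case: (mxrank_adds_leqif b e); rewrite rb re.
have := sub_rank sbp; rewrite rbp => /(_ rbe) h.
exact: submx_trans (addsmxSr _ _) h.
Qed.


Theorem proposition1 (F : finFieldType) (n : nat)
  (L : {set {set 'rV[F]_(n.+1)}}) :
  let q := #|F| in
  (forall l, l \in L -> is_line l) ->
  L != set0 ->
  (* (Pt) *)
  (forall P, is_point P ->
     #|[set l in L | P \subset l]| \in [:: 0; q.+1]) ->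
  (* (Pl) *)
  (forall p, is_plane p ->
     #|[set l in L | l \subset p]| \in [:: 0; 1; q.+1]) ->
  (* (Sd) *)
  (forall s, is_solid s ->
     #|[set l in L | l \subset s]| \in [:: 0; 1; q.+1; (2 * q).+1]) ->
  (* (To) *)
  #|L| <= q ^ 5 + q ^ 4 + q ^ 3 + q ^ 2 + q + 1 ->
  forall A B C D E : {set 'rV[F]_(n.+1)},
  is_point A -> is_point B -> is_point C -> is_point D -> is_point E ->
  uniq [:: A; B; C; D; E] ->
  let AB := pclosure (A :|: B) in
  let BC := pclosure (B :|: C) in
  let CD := pclosure (C :|: D) in
  let DE := pclosure (D :|: E) in
  let EA := pclosure (E :|: A) in
  AB \in L -> BC \in L -> CD \in L -> DE \in L -> EA \in L ->
  uniq [:: AB; BC; CD; DE; EA] ->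
  let U := pclosure (A :|: B :|: C :|: D :|: E) in
  forall P, is_point P -> P \subset pclosure (B :|: E) ->
    #|[set l in L | (P \subset l) && (l \subset U)]| = q.+1 ->
    P = B \/ P = E.
Proof.
move=> q hline _ hPt hPl hSd _ A B C D E pA pB pC pD pE uP AB BC CD DE EA
  hAB hBC hCD hDE hEA uL U P pP PBE hU.
have pen := pencil hline hPt hPl hSd.
have cov := covering hline hPt hPl hSd.
have rl := @rank_l F n L hline.
have eql := @eq_lines F n L hline.
have q2 := q_gt1 F.
case: (eqVneq P B) => [->|nPB]; first by left.
case: (eqVneq P E) => [->|nPE]; first by right.
exfalso.
move: uP => /= /and5P[uA uB uC uD _]; rewrite !inE !negb_or in uA uB uC uD.
move: uL => /= /and5P[vA vB vC vD _]; rewrite !inE !negb_or in vA vB vC vD.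
case/andP: uC => nCD _.
case/andP: vB => nBCCD _.
case/andP: vC => nCDDE _.
set a := pspan A; set b := pspan B; set c := pspan C; set d := pspan D;
set e := pspan E; set p := pspan P.
have ra : \rank a = 1 := psub_rank pA.
have rb : \rank b = 1 := psub_rank pB.
have rc : \rank c = 1 := psub_rank pC.
have rd : \rank d = 1 := psub_rank pD.
have re : \rank e = 1 := psub_rank pE.
have rp : \rank p = 1 := psub_rank pP.
have eBC : (pspan BC :=: b + c)%MS := span2 B C.
have eCD : (pspan CD :=: c + d)%MS := span2 C D.
have eDE : (pspan DE :=: d + e)%MS := span2 D E.
have npb : ~~ (p <= b)%MS by apply: pt_neq; rewrite // eq_sym.
have npe : ~~ (p <= e)%MS by apply: pt_neq; rewrite // eq_sym.
have ndc : ~~ (d <= c)%MS by apply: pt_neq.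
have pbe : (p <= b + e)%MS by move: PBE; rewrite sub_pcl // pspanU.
have ebp : (e <= b + p)%MS by apply: swap_pt.
have bep : (b <= e + p)%MS by apply: swap_pt; rewrite // addsmxC.
have cBC : (c <= pspan BC)%MS by rewrite eBC addsmxSr.
have cCD : (c <= pspan CD)%MS by rewrite eCD addsmxSl.
have dCD : (d <= pspan CD)%MS by rewrite eCD addsmxSr.
have dDE : (d <= pspan DE)%MS by rewrite eDE addsmxSl.
have [rpiC cC eC] := pen _ c BC CD rc hBC hCD nBCCD cBC cCD.
have [rpiD cD eD] := pen _ d CD DE rd hCD hDE nCDDE dCD dDE.
set piC := (pspan BC + pspan CD)%MS in rpiC eC.
set piD := (pspan CD + pspan DE)%MS in rpiD eD.
have bpiC : (b <= piC)%MS.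
  by apply: submx_trans (addsmxSl _ _); rewrite eBC addsmxSl.
have cpiC : (c <= piC)%MS by apply: submx_trans cBC (addsmxSl _ _).
have dpiC : (d <= piC)%MS by apply: submx_trans dCD (addsmxSr _ _).
have cpiD : (c <= piD)%MS by apply: submx_trans cCD (addsmxSl _ _).
have dpiD : (d <= piD)%MS by apply: submx_trans dCD (addsmxSl _ _).
have epiD : (e <= piD)%MS.
  by apply: submx_trans (addsmxSr _ _); rewrite eDE addsmxSr.
have npC : ~~ (p <= piC)%MS.
  apply/negP => h.
  have epiC : (e <= piC)%MS by apply: submx_trans ebp _; rewrite addsmx_sub bpiC h.
  have : DE \in Lth L c.
    by rewrite eC inE hDE eDE addsmx_sub dpiC epiC.
  rewrite inE => /andP[_ cDE].
  have : CD = DE by apply: eql => //; rewrite eCD addsmx_sub cDE dDE.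
  by move/eqP; rewrite (negPf nCDDE).
have npD : ~~ (p <= piD)%MS.
  apply/negP => h.
  have bpiD : (b <= piD)%MS by apply: submx_trans bep _; rewrite addsmx_sub epiD h.
  have : BC \in Lth L d.
    by rewrite eD inE hBC eBC addsmx_sub bpiD cpiD.
  rewrite inE => /andP[_ dBC].
  have : CD = BC by apply: eql => //; rewrite eCD addsmx_sub cBC dBC.
  by move=> e'; rewrite e' eqxx in nBCCD.
set u := pspan (A :|: B :|: C :|: D :|: E).
have hU' : [set l in L | P \subset l & l \subset U] = Lth L p :&: Lin L u.
  apply/setP => l; rewrite !inE; case lL: (l \in L) => //=.
  by rewrite (sub_psub pP (hline _ lL)) -[U]/(ps u) (psub_sub_ps _ (hline _ lL)).
have cP : #|Lth L p| = q.+1.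
  have h1 : q.+1 <= #|Lth L p| by rewrite -hU hU' subset_leq_card // subsetIl.
  move: (@Lth_pt F n L hline hPt _ p rp) h1; rewrite !inE.
  by case/orP => /eqP ->.
have sPU : Lth L p \subset Lin L u.
  have : Lth L p :&: Lin L u == Lth L p.
    by rewrite eqEcard subsetIl -hU' hU cP leqnn.
  by move/eqP => e'; rewrite -e'; apply: subsetIr.
have [l1 [l2 [l1P l2P n12]]] : exists l1 l2,
    [/\ l1 \in Lth L p, l2 \in Lth L p & l1 != l2].
  by apply/card_gt1P; rewrite cP ltnS; exact: ltnW q2.
have l1u := subsetP sPU _ l1P; have l2u := subsetP sPU _ l2P.
move: l1P l2P l1u l2u; rewrite !inE => /andP[l1L pl1] /andP[l2L pl2]
  /andP[_ l1u] /andP[_ l2u].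
have [rpiP cP' eP] := pen _ p l1 l2 rp l1L l2L n12 pl1 pl2.
set piP := (pspan l1 + pspan l2)%MS in rpiP eP.
have piPu : (piP <= u)%MS by rewrite addsmx_sub l1u.
have inu : forall X : {set 'rV[F]_(n.+1)}, X \subset A :|: B :|: C :|: D :|: E -> (pspan X <= u)%MS.
  by move=> X hX; apply: pspanS.
have bu : (b <= u)%MS by apply: inu; apply/subsetP => v vB; rewrite !inE vB ?orbT.
have cu : (c <= u)%MS by apply: inu; apply/subsetP => v vB; rewrite !inE vB ?orbT.
have du : (d <= u)%MS by apply: inu; apply/subsetP => v vB; rewrite !inE vB ?orbT.
have piCu : (piC <= u)%MS.
  by rewrite addsmx_sub eBC eCD !addsmx_sub bu cu du.
have ru : \rank u <= 5.
  rewrite /u; apply: leq_trans (rank_spanU _ _) _; rewrite re.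
  apply: leq_trans (leq_add (rank_spanU _ _) (leqnn 1)) _; rewrite rd.
  apply: leq_trans (leq_add (leq_add (rank_spanU _ _) (leqnn 1)) (leqnn 1)) _; rewrite rc.
  apply: leq_trans (leq_add (leq_add (leq_add (rank_spanU _ _) (leqnn 1)) (leqnn 1))
     (leqnn 1)) _.
  by rewrite ra rb.
have rcap : 0 < \rank (piP :&: piC)%MS.
  have e1 := mxrank_sum_cap piP piC; rewrite rpiP rpiC in e1.
  have le : \rank (piP + piC)%MS <= 5.
    by apply: leq_trans (mxrankS _) ru; rewrite addsmx_sub piPu.
  rewrite lt0n; apply/eqP => h0; rewrite h0 addn0 in e1; rewrite e1 in le.
  by [].
have [w wK w0] : exists2 w : 'rV[F]_(n.+1), (w <= piP :&: piC)%MS & w != 0%R.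
  by apply/rowV0Pn; rewrite -mxrank_eq0 -lt0n.
move: wK; rewrite sub_capmx => /andP[wP wC].
have rw : \rank w = 1 by rewrite rank_rV w0.
have [mP mPp wmP] := cov _ p l1 l2 w rp l1L l2L n12 pl1 pl2 wP.
have [mC mCc wmC] := cov _ c BC CD w rc hBC hCD nBCCD cBC cCD wC.
move: (mPp) (mCc); rewrite !inE => /andP[mPL pmP] /andP[mCL cmC].
have nwp : ~~ (w <= p)%MS.
  apply/negP => h; case/negP: npC; have := sub_rank h; rewrite rw rp.
  by move/(_ (leqnn 1)) => h'; exact: submx_trans h' wC.
have nwc : ~~ (w <= c)%MS.
  apply/negP => h; have := sub_rank h; rewrite rw rc => /(_ (leqnn 1)) h'.
  have : mP \in Lth L c by rewrite inE mPL (submx_trans h' wmP).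
  rewrite eC inE => /andP[_ h2]; case/negP: npC; exact: submx_trans pmP h2.
have nwd : ~~ (w <= d)%MS.
  apply/negP => h; have := sub_rank h; rewrite rw rd => /(_ (leqnn 1)) h'.
  have : mP \in Lth L d by rewrite inE mPL (submx_trans h' wmP).
  rewrite eD inE => /andP[_ h2]; case/negP: npD; exact: submx_trans pmP h2.
have nPC : mP != mC.
  apply/eqP => e'; move: mCc; rewrite -e' eC inE => /andP[_ h2].
  by case/negP: npC; exact: submx_trans pmP h2.
have [rpiW cW eW] := pen _ w mP mC rw mPL mCL nPC wmP wmC.
set piW := (pspan mP + pspan mC)%MS in rpiW eW.
set Z := (piC + p)%MS.
have rZ : \rank Z = 4 by rewrite /Z rank_add_pt // rpiC.
have piCZ : (piC <= Z)%MS := addsmxSl _ _.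
have pZ : (p <= Z)%MS := addsmxSr _ _.
have bZ : (b <= Z)%MS := submx_trans bpiC piCZ.
have piDZ : (piD <= Z)%MS.
  rewrite addsmx_sub eDE addsmx_sub (submx_trans dpiC piCZ) /=.
  rewrite (submx_trans (addsmxSr (pspan BC) _) piCZ) /=.
  by apply: submx_trans ebp _; rewrite addsmx_sub bZ pZ.
have piWZ : (piW <= Z)%MS.
  rewrite addsmx_sub; apply/andP; split.
    apply: submx_trans (_ : (pspan mP <= p + w)%MS) _.
      by apply: (line_sub rp rw nwp (rl _ mPL) pmP wmP); rewrite ?addsmxSl ?addsmxSr.
    by rewrite addsmx_sub pZ (submx_trans wC piCZ).
  apply: submx_trans (_ : (pspan mC <= c + w)%MS) _.
    by apply: (line_sub rc rw nwc (rl _ mCL) cmC wmC); rewrite ?addsmxSl ?addsmxSr.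
  by rewrite addsmx_sub (submx_trans cpiC piCZ) (submx_trans wC piCZ).
have sX : Lth L c :|: Lth L d :|: Lth L w \subset Lin L Z.
  rewrite !subUset eC eD eW !Lin_mono //.
have iCD := @Lth_inter F n L hline _ _ c d rc rd ndc.
have iCW := @Lth_inter F n L hline _ _ c w rc rw nwc.
have iDW := @Lth_inter F n L hline _ _ d w rd rw nwd.
have hZ := @Lin_sd F n L hline hSd _ Z rZ.
have fa := @final_arith _ _ _ _ _ _ _ 0 _ q2 cC cD cW iCD iCW iDW hZ.
apply: (fa _ _ _ (cardsUI (Lth L c) (Lth L d))
   (cardsUI (Lth L c :|: Lth L d) (Lth L w))).
  by rewrite setIUl; case: (leq_card_setU (Lth L c :&: Lth L w) (Lth L d :&: Lth L w)).
exact: subset_leq_card sX.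
Qed.
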